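(* Let $n$ be a positive integer, $g=3n+2$, and let $G=\{\ell_1<\dots<\ell_g\}$ be a pure $(2n+1)$-sparse gapset of genus $g$ with multiplicity $m$ and depth $q\le 3$. Let $\alpha=\max\{i:\ell_{i+1}-\ell_i=2n+1\}$. Then $\ell_\alpha\le 2m-1$.
   Context: A gapset is a finite set $G\subset\mathbb{N}=\{1,2,\dots\}$ such that whenever $z\in G$ and $z=x+y$ with $x,y\in\mathbb{N}$, then $x\in G$ or $y\in G$; its genus is $g=\#G$ (a nonempty gapset of genus $g$ is contained in $[1,2g-1]$). Multiplicity $m(G)=\min\{s\in\mathbb{N}:s\notin G\}$; conductor $c(G)=\min\{s\in\mathbb{N}: s+t\notin G\ \forall t\in\mathbb{N}_0\}$; depth $q(G)=\lceil c(G)/m(G)\rceil$. $G$ is pure $\kappa$-sparse if $\ell_{i+1}-\ell_i\le\kappa$ for all $i$ with equality for some $i$. *)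

(* Defs.v *)
From mathcomp Require Import all_boot.
Set Implicit Arguments. Unset Strict Implicit. Unset Printing Implicit Defensive.

(* A gapset G ⊂ ℕ = {1,2,...} is represented by the strictly increasing
   list of its elements [:: ℓ_1; ...; ℓ_g]. *)
Definition is_gapset (G : seq nat) : Prop :=
  [/\ sorted ltn G,
      all (fun x => 0 < x) G &
      forall z x y, z \in G -> 0 < x -> 0 < y -> z = x + y ->
        (x \in G) || (y \in G)].

Definition genus (G : seq nat) : nat := size G.

(* ℓ_i, 1-indexed *)
Definition ell (G : seq nat) (i : nat) : nat := nth 0 G i.-1.

(* multiplicity: least s >= 1 with s ∉ G (searched in 1..#G+1, which
   necessarily contains an element outside G) *)
Definition mult (G : seq nat) : nat :=
  nth 0 [seq s <- iota 1 (size G).+1 | s \notin G] 0.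

(* conductor: least s >= 1 with s + t ∉ G for all t >= 0, i.e. every
   element of G is < s; searched in 1..(sum of G)+1 *)
Definition cond (G : seq nat) : nat :=
  nth 0 [seq s <- iota 1 (sumn G).+1 | all (fun x => x < s) G] 0.

(* depth q = ceil (c / m) *)
Definition depth (G : seq nat) : nat := (cond G + mult G - 1) %/ mult G.

Definition pure_sparse (k : nat) (G : seq nat) : Prop :=
  (forall i, 1 <= i < size G -> ell G i.+1 - ell G i <= k) /\
  (exists2 i, 1 <= i < size G & ell G i.+1 - ell G i = k).

(* Main.v *)
Require Import Defs.
From mathcomp Require Import all_boot zify.

Lemma sumb_count (r : seq nat) (a : pred nat) : \sum_(j <- r) (a j : nat) = count a r.
Proof. by rewrite -sum1_count [in RHS]big_mkcond /=; apply: eq_bigr => i _; case: (a i). Qed.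

Lemma count_lemma {G : seq nat} {z : nat} : uniq G -> z \in G -> 0 < z ->
  (forall j, 0 < j < z -> (j \in G) || ((z - j) \in G)) -> z.+1 <= 2 * size G.
Proof.
move=> uG zG z0 H.
set S1 := \sum_(1 <= j < z) ((j \in G) : nat).
have E2 : \sum_(1 <= j < z) (((z - j) \in G) : nat) = S1.
  rewrite /S1 big_nat_rev /=; apply: eq_big_nat => j /andP[j1 jz].
  by congr (nat_of_bool (_ \in G)); lia.
have Hlow : z - 1 <= S1 + S1.
  rewrite -{2}E2 -big_split /=.
  have -> : z - 1 = \sum_(1 <= j < z) 1 by rewrite sum_nat_const_nat; lia.
  rewrite big_nat_cond [X in _ <= X]big_nat_cond; apply: leq_sum => j /andP[/andP[j1 jz] _].
  by have := H j; rewrite j1 jz /=; case: (j \in G); case: (_ \in G) => //; move/(_ isT).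
have Hup : S1.+1 <= size G.
  have -> : S1.+1 = \sum_(1 <= j < z.+1) ((j \in G) : nat).
    by rewrite big_nat_recr //= zG addn1.
  rewrite /index_iota sumb_count -size_filter subSS subn0.
  apply: uniq_leq_size; first by rewrite filter_uniq // iota_uniq.
  by move=> x; rewrite mem_filter => /andP[].
lia.
Qed.

Lemma mult_prop {G : seq nat} : uniq G -> mult G \notin G /\ 0 < mult G.
Proof.
move=> uG.
have hs : has (fun s => s \notin G) (iota 1 (size G).+1).
  apply/negPn/negP => /hasPn hn.
  have : size (iota 1 (size G).+1) <= size G.
    apply: uniq_leq_size; first exact: iota_uniq.
    by move=> x /hn; rewrite negbK.
  by rewrite size_iota ltnn.
have : mult G \in [seq s <- iota 1 (size G).+1 | s \notin G].
  by apply: mem_nth; rewrite size_filter_gt0.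
rewrite mem_filter mem_iota => /andP[-> /andP[-> _]]; done.
Qed.

Theorem mainTheorem17 (n : nat) (G : seq nat) (alpha : nat) :
  0 < n ->
  is_gapset G ->
  genus G = 3 * n + 2 ->
  pure_sparse (2 * n + 1) G ->
  depth G <= 3 ->
  1 <= alpha < size G ->
  ell G alpha.+1 - ell G alpha = 2 * n + 1 ->
  (forall i, 1 <= i < size G -> ell G i.+1 - ell G i = 2 * n + 1 -> i <= alpha) ->
  ell G alpha <= 2 * mult G - 1.
Proof.
move=> n0 [srt pos gap] gen _ _ /andP[a1 aG] dif _.
move: dif; rewrite /ell /=.
set y := nth 0 G alpha.-1; set z := nth 0 G alpha => dif.
have := srt; rewrite ltn_sorted_uniq_leq => /andP[uG sl].
have yG : y \in G by apply: mem_nth; apply: leq_ltn_trans (leq_pred _) aG.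
have zG : z \in G by apply: mem_nth.
have ap : alpha.-1.+1 = alpha by rewrite prednK.
have zy : z = y + (2 * n + 1) by lia.
have notin : forall j, y < j < z -> j \notin G.
  move=> j /andP[yj jz]; apply/negP => jG.
  have kS : index j G < size G by rewrite index_mem.
  have ej : nth 0 G (index j G) = j by apply: nth_index.
  have hom := sorted_leq_nth leq_trans leqnn 0 sl.
  case: (leqP (index j G) alpha.-1) => hk.
    have := hom (index j G) alpha.-1; rewrite !inE ej -/y => /(_ kS) .
    move=> h; have : j <= y by apply: h => //; lia.
    lia.
  have := hom alpha (index j G); rewrite !inE ej -/z => h.
  have : z <= j by apply: h => //; lia.
  lia.
have small : forall k, 0 < k <= 2 * n -> k \in G.
  move=> k /andP[k0 kn].
  have := gap z k (z - k) zG k0 (ltac:(lia)) (ltac:(lia)).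
  have : z - k \notin G by apply: notin; lia.
  by move/negbTE => ->; rewrite orbF.
have [mG m0] := mult_prop (G:=G) uG.
have m2n : 2 * n < mult G.
  rewrite ltnNge; apply/negP => h; move: mG; rewrite small //; lia.
rewrite leqNgt; apply/negP => hy.
have hy2 : 2 * mult G < y.
  rewrite ltn_neqAle; apply/andP; split; last by lia.
  apply/eqP => e.
  have := gap y (mult G) (mult G) yG m0 m0 (ltac:(lia)).
  by rewrite orbb (negbTE mG).
have := count_lemma (G:=G) uG zG (ltac:(lia)).
have : forall j, 0 < j < z -> (j \in G) || ((z - j) \in G).
  move=> j /andP[j0 jz]; apply: (gap z) => //; lia.
move=> H /(_ H); rewrite /genus in gen; rewrite gen; lia.
Qed.
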